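(* Let $L$ be a finite-dimensional Lie algebra over a field $F$. Then $L$ is supersolvable if and only if $\eta(L:M)=1$ for all maximal subalgebras $M$ of $L$.
   Context: $L$ is supersolvable if there is a chain $0=L_0\subset L_1\subset\cdots\subset L_n=L$ of ideals of $L$ with $\dim(L_{i}/L_{i-1})=1$ for all $i$. For a nonzero subalgebra $X$ of $L$, the strict core $k(X)$ is the sum of all ideals of $L$ that are proper subalgebras of $X$ (it is $0$ if there are none). For a maximal subalgebra $M$, a subalgebra $C$ is a completion of $M$ if $C\not\subseteq M$ but every proper subalgebra of $C$ that is an ideal of $L$ is contained in $M$; an ideal completion is a completion that is an ideal of $L$. The ideal index $\eta(L:M)$ is $\dim(C/k(C))$ for any ideal completion $C$ of $M$ (independent of the choice of $C$). *)

(* Defs.v *)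
(* Finite-dimensional Lie algebras over a field F are modelled
   as a vectType L over F (finite dimensional) with a bracket br. *)
From HB Require Import structures.
From mathcomp Require Import all_boot all_order all_algebra.
Set Implicit Arguments. Unset Strict Implicit. Unset Printing Implicit Defensive.
Import GRing.Theory.
Local Open Scope ring_scope.


Section Lie.
Variables (F : fieldType) (L : vectType F) (br : L -> L -> L).

Definition lie_bracket : Prop :=
  [/\ forall (a : F) x y z, br (a *: x + y) z = a *: br x z + br y z,
      forall (a : F) x y z, br z (a *: x + y) = a *: br z x + br z y,
      forall x, br x x = 0
    & forall x y z, br x (br y z) + br y (br z x) + br z (br x y) = 0].

Definition subalgebra (U : {vspace L}) : Prop :=
  forall u v, u \in U -> v \in U -> br u v \in U.

Definition lie_ideal (U : {vspace L}) : Prop :=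
  forall x u, u \in U -> br x u \in U /\ br u x \in U.

Definition maximal_subalgebra (M : {vspace L}) : Prop :=
  [/\ subalgebra M, M != fullv%VS &
      forall U : {vspace L}, subalgebra U -> (M <= U)%VS -> U = M \/ U = fullv%VS].

Definition supersolvable : Prop :=
  exists (n : nat) (Ls : nat -> {vspace L}),
    [/\ Ls 0%N = 0%VS, Ls n = fullv%VS,
        forall i, (i <= n)%N -> lie_ideal (Ls i)
      & forall i, (i < n)%N ->
          (Ls i <= Ls i.+1)%VS /\ \dim (Ls i.+1) = (\dim (Ls i)).+1].

(* K is the strict core k(X) of X: the sum of all ideals of L that are proper
   subalgebras of X, i.e. the least subspace containing all of them
   (the zero space when there are none). *)
Definition strict_core (X K : {vspace L}) : Prop :=
  (forall I : {vspace L}, lie_ideal I -> (I <= X)%VS -> I != X -> (I <= K)%VS) /\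
  (forall V : {vspace L},
      (forall I : {vspace L}, lie_ideal I -> (I <= X)%VS -> I != X -> (I <= V)%VS) ->
      (K <= V)%VS).

Definition completion (M C : {vspace L}) : Prop :=
  [/\ subalgebra C, ~~ (C <= M)%VS &
      forall I : {vspace L}, subalgebra I -> (I <= C)%VS -> I != C -> lie_ideal I ->
        (I <= M)%VS].

Definition ideal_completion (M C : {vspace L}) : Prop :=
  completion M C /\ lie_ideal C.

(* eta(L : M) = n, where eta(L:M) = dim (C / k(C)) for an ideal completion C
   (independent of the choice of C); since k(C) <= C, dim (C/k(C)) is
   \dim C - \dim k(C). *)
Definition ideal_index_is (M : {vspace L}) (n : nat) : Prop :=
  forall C K : {vspace L}, ideal_completion M C -> strict_core C K ->
    (\dim C - \dim K)%N = n.

End Lie.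

(* Main.v *)
Require Import Defs.
From HB Require Import structures.
From mathcomp Require Import all_boot all_order all_algebra.
From Stdlib Require Import Classical ClassicalEpsilon Lia.
From mathcomp Require Import zify.
Set Warnings "-notation-overridden,-ambiguous-paths,-redundant-canonical-projection".
Set Implicit Arguments. Unset Strict Implicit. Unset Printing Implicit Defensive.
Import GRing.Theory.
Local Open Scope ring_scope.

Section Lie.
Variables (F : fieldType) (L : vectType F) (br : L -> L -> L).
Hypothesis hbr : lie_bracket br.

Definition brl (x : L) : L -> L := br x.
Definition brr (x : L) : L -> L := br^~ x.
Fact brl_lin x : linear (brl x).
Proof. by case: hbr => _ h _ _ a y z; rewrite /brl h. Qed.
Fact brr_lin x : linear (brr x).
Proof. by case: hbr => h _ _ _ a y z; rewrite /brr h. Qed.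
HB.instance Definition _ x := GRing.isLinear.Build F L L *:%R (brl x) (brl_lin x).
HB.instance Definition _ x := GRing.isLinear.Build F L L *:%R (brr x) (brr_lin x).
Definition adl (x : L) : 'End(L) := linfun (brl x).
Definition adr (x : L) : 'End(L) := linfun (brr x).
Lemma adlE x y : adl x y = br x y. Proof. by rewrite /adl lfunE. Qed.
Lemma adrE x y : adr x y = br y x. Proof. by rewrite /adr lfunE. Qed.

Lemma brDr x y z : br x (y + z) = br x y + br x z. Proof. exact: (linearD (brl x)). Qed.
Lemma brDl x y z : br (y + z) x = br y x + br z x. Proof. exact: (linearD (brr x)). Qed.
Lemma brZr a x y : br x (a *: y) = a *: br x y. Proof. exact: (linearZZ (brl x)). Qed.
Lemma brZl a x y : br (a *: y) x = a *: br y x. Proof. exact: (linearZZ (brr x)). Qed.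
Lemma br0r x : br x 0 = 0. Proof. exact: (linear0 (brl x)). Qed.
Lemma br0l x : br 0 x = 0. Proof. exact: (linear0 (brr x)). Qed.
Lemma brNr x y : br x (- y) = - br x y. Proof. exact: (linearN (brl x)). Qed.
Lemma brNl x y : br (- y) x = - br y x. Proof. exact: (linearN (brr x)). Qed.
Lemma brBr x y z : br x (y - z) = br x y - br x z. Proof. exact: (linearB (brl x)). Qed.
Lemma brBl x y z : br (y - z) x = br y x - br z x. Proof. exact: (linearB (brr x)). Qed.
Lemma brxx x : br x x = 0. Proof. by case: hbr. Qed.
Lemma brC x y : br y x = - br x y.
Proof.
have := brxx (x + y); rewrite brDl !brDr !brxx add0r addr0 => /eqP.
by rewrite addr_eq0 => /eqP ->; rewrite opprK.
Qed.
Lemma jacobi x y z : br x (br y z) = br (br x y) z + br y (br x z).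
Proof.
case: hbr => _ _ _ /(_ x y z) J.
have -> : br x (br y z) = - (br y (br z x) + br z (br x y)).
  by apply/eqP; rewrite -addr_eq0 addrA J.
by rewrite opprD addrC (brC (br x y) z) (brC x z) brNr !opprK.
Qed.

Local Notation ideal := (lie_ideal br).
Local Notation subalg := (subalgebra br).

Lemma ideal_l (I : {vspace L}) : (forall x u, u \in I -> br x u \in I) -> ideal I.
Proof. by move=> h x u uI; split; [apply: h | rewrite brC memvN; apply: h]. Qed.
Lemma idealL (I : {vspace L}) x u : ideal I -> u \in I -> br x u \in I.
Proof. by move=> h uI; case: (h x u uI). Qed.
Lemma idealR (I : {vspace L}) x u : ideal I -> u \in I -> br u x \in I.
Proof. by move=> h uI; case: (h x u uI). Qed.
Lemma ideal_sub I : ideal I -> subalg I.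
Proof. by move=> h u v _ vI; apply: idealL. Qed.
Lemma ideal_add I J : ideal I -> ideal J -> ideal (I + J)%VS.
Proof.
move=> hI hJ; apply: ideal_l => x w /memv_addP[u uI [v vJ ->]].
by rewrite brDr memv_add // idealL.
Qed.
Lemma ideal_cap I J : ideal I -> ideal J -> ideal (I :&: J)%VS.
Proof.
move=> hI hJ; apply: ideal_l => x w /memv_capP[wI wJ].
by rewrite memv_cap !idealL.
Qed.
Lemma ideal0 : ideal 0%VS.
Proof. by apply: ideal_l => x u; rewrite memv0 => /eqP ->; rewrite br0r mem0v. Qed.
Lemma idealf : ideal fullv.
Proof. by apply: ideal_l => x u _; rewrite memvf. Qed.
Lemma subalg_add X K : subalg X -> ideal K -> subalg (X + K)%VS.
Proof.
move=> hX hK u v /memv_addP[x1 x1X [k1 k1K ->]] /memv_addP[x2 x2X [k2 k2K ->]].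
rewrite brDl !brDr -!addrA; apply: memv_add; first exact: hX.
apply: rpredD; first exact: idealL.
by apply: rpredD; [exact: idealR | exact: idealL].
Qed.

Implicit Types (f : 'End(L)).

Definition lpow (f : 'End(L)) n : 'End(L) := iter n (fun g => f \o g)%VF \1%VF.
Lemma lpow0 f v : lpow f 0 v = v. Proof. by rewrite /lpow /= id_lfunE. Qed.
Lemma lpowS f n v : lpow f n.+1 v = f (lpow f n v).
Proof. by rewrite /lpow iterS comp_lfunE. Qed.
Lemma lpow_add f m n v : lpow f (m + n) v = lpow f m (lpow f n v).
Proof. by elim: m => [|m IH]; rewrite ?lpow0 // addSn !lpowS IH. Qed.
Lemma lpowSr f n v : lpow f n.+1 v = lpow f n (f v).
Proof. by rewrite -addn1 lpow_add lpowS lpow0. Qed.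
Lemma lpow_inv f (K : {vspace L}) n v :
  (forall w, w \in K -> f w \in K) -> v \in K -> lpow f n v \in K.
Proof. by move=> h vK; elim: n => [|n IH]; rewrite ?lpow0 // lpowS h. Qed.

Definition Dm (y : L) (l : F) : 'End(L) := (adl y - l *: \1)%VF.
Lemma DmE y l v : Dm y l v = br y v - l *: v.
Proof. by rewrite /Dm add_lfunE opp_lfunE scale_lfunE id_lfunE adlE. Qed.
Lemma DmD y l u v : Dm y l (u + v) = Dm y l u + Dm y l v.
Proof. by rewrite !DmE brDr scalerDr opprD addrACA. Qed.
Lemma DmZ y l c v : Dm y l (c *: v) = c *: Dm y l v.
Proof. by rewrite !DmE brZr scalerBr !scalerA mulrC. Qed.
Lemma zmod_hlp (a b c d : L) : (a + c) + (b + d) - a - b = c + d.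
Proof. rewrite addrACA. rewrite -[LHS]addrA. rewrite -opprD. by rewrite addrC addKr. Qed.
Lemma DmN y l v : Dm y l (- v) = - Dm y l v.
Proof. by rewrite !DmE brNr scalerN opprB opprK addrC. Qed.
Lemma DmB y l u v : Dm y l (u - v) = Dm y l u - Dm y l v.
Proof. by rewrite DmD DmN. Qed.
Lemma Dm_ideal (I : {vspace L}) y l v : ideal I -> v \in I -> Dm y l v \in I.
Proof. by move=> hI vI; rewrite DmE memvB ?memvZ ?idealL. Qed.
Lemma Dm_shift y l m v : Dm y m v = Dm y l v + (l - m) *: v.
Proof. by rewrite !DmE scalerBl addrA subrK. Qed.
Lemma Dm_comm y l m v : Dm y l (Dm y m v) = Dm y m (Dm y l v).
Proof.
rewrite !DmE !brBr !brZr !scalerBr !scalerA (mulrC m l).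
rewrite !opprB !addrA [LHS]addrAC [RHS]addrAC; congr (_ + _); exact: addrAC.
Qed.
Lemma lpow_comm y l m n v : lpow (Dm y l) n (Dm y m v) = Dm y m (lpow (Dm y l) n v).
Proof. by elim: n => [|n IH]; rewrite ?lpow0 // !lpowS IH Dm_comm. Qed.
Lemma Dm_der y l m u v : Dm y (l + m) (br u v) = br (Dm y l u) v + br u (Dm y m v).
Proof.
rewrite !DmE jacobi brBl brBr brZl brZr scalerDl.
by rewrite opprD addrACA.
Qed.

Lemma nat_min (P : nat -> Prop) : (exists n, P n) -> exists n, P n /\ forall m, P m -> (n <= m)%N.
Proof.
case=> n Pn; suff: forall k n, (n <= k)%N -> P n -> exists n, P n /\ forall m, P m -> (n <= m)%N.
  by move/(_ n n (leqnn n) Pn).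
elim=> [|k IH] {}n hn {}Pn.
  exists n; split=> // m _; move: hn; rewrite leqn0 => /eqP ->; exact: leq0n.
case: (classic (exists m, (m < n)%N /\ P m)) => [[m [hm Pm]]|hno].
  by apply: (IH m) => //; rewrite -ltnS; apply: leq_trans hm hn.
exists n; split=> // m Pm; rewrite leqNgt; apply/negP => hm; apply: hno; by exists m.
Qed.

Lemma nat_max (P : nat -> Prop) b : (exists n, P n) -> (forall n, P n -> (n <= b)%N) ->
  exists n, P n /\ forall m, P m -> (m <= n)%N.
Proof.
move=> [n Pn] hb.
have [k [[m [Pm ->]] hk]] := nat_min (P := fun k => exists m, P m /\ k = (b - m)%N)
   (ex_intro _ (b - n)%N (ex_intro _ n (conj Pn erefl))).
exists m; split=> // m' Pm'.
have := hk (b - m')%N (ex_intro _ m' (conj Pm' erefl)).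
have := hb _ Pm; have := hb _ Pm'; lia.
Qed.

Lemma vs_min (P : {vspace L} -> Prop) : (exists V, P V) ->
  exists V, P V /\ forall W, P W -> (\dim V <= \dim W)%N.
Proof.
move=> [V PV].
have [n [[W [PW <-]] hn]] := nat_min (P := fun n => exists W, P W /\ \dim W = n)
   (ex_intro _ _ (ex_intro _ V (conj PV erefl))).
by exists W; split=> // W' PW'; apply: hn; exists W'.
Qed.

Lemma vs_max (P : {vspace L} -> Prop) : (exists V, P V) ->
  exists V, P V /\ forall W, P W -> (\dim W <= \dim V)%N.
Proof.
move=> [V PV].
have hb : forall n, (exists W, P W /\ \dim W = n) -> (n <= \dim (fullv : {vspace L}))%N.
  by move=> n [W [_ <-]]; apply: dimvS; apply: subvf.
have [n [[W [PW <-]] hn]] := nat_max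
   (ex_intro _ _ (ex_intro _ V (conj PV erefl))) hb.
by exists W; split=> // W' PW'; apply: hn; exists W'.
Qed.

Lemma first_fail (P : nat -> Prop) n : P 0%N -> ~ P n -> exists i, (i < n)%N /\ P i /\ ~ P i.+1.
Proof.
elim: n => [|n IH] P0 Pn; first by [].
case: (classic (P n)) => Pn'.
  by exists n.
by have [i [hi Pi]] := IH P0 Pn'; exists i; split=> //; apply: ltnW.
Qed.

Lemma subv_dim_eq (U V : {vspace L}) : (U <= V)%VS -> (\dim V <= \dim U)%N -> U = V.
Proof. by move=> h1 h2; apply/eqP; rewrite eqEdim h1 h2. Qed.

Lemma max_above X : subalg X -> X != fullv%VS ->
  exists M, maximal_subalgebra br M /\ (X <= M)%VS.
Proof.
move=> hX hXf.
have [M [[hM [XM Mf]] hmax]] := vs_max (P := fun V => subalg V /\ (X <= V)%VS /\ V != fullv%VS)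
   (ex_intro _ X (conj hX (conj (subvv X) hXf))).
exists M; split=> //; split=> // U hU MU.
case: (classic (U = fullv%VS)) => hUf; [by right | left].
apply/esym/subv_dim_eq => //; apply: hmax; split=> //; split; first exact: subv_trans MU.
by apply/eqP.
Qed.

Lemma strict_core_ex C : exists S, ideal S /\ strict_core br C S.
Proof.
pose ub W := forall I : {vspace L}, ideal I -> (I <= C)%VS -> I != C -> (I <= W)%VS.
have [S [[hS hSl] hmax]] := vs_max (P := fun V => ideal V /\ forall W, ub W -> (V <= W)%VS)
   (ex_intro _ 0%VS (conj ideal0 (fun W _ => sub0v W))).
exists S; split=> //; split=> // I hI IC IneC.
have P2 : ideal (S + I)%VS /\ forall W, ub W -> (S + I <= W)%VS.
  split; first exact: ideal_add.
  by move=> W hW; rewrite subv_add hSl // hW.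
have := hmax _ P2 => hd.
have hE := subv_dim_eq (addvSl S I) hd.
by rewrite hE; exact: addvSr.
Qed.

Definition NN := (\dim (fullv : {vspace L})).+1.

Lemma stab f (K : {vspace L}) : (forall w, w \in K -> f w \in K) ->
  forall m v, lpow f m v \in K -> lpow f NN v \in K.
Proof.
move=> hK.
pose S k := (lpow f k @^-1: K)%VS.
have memS k v : (v \in S k) = (lpow f k v \in K) by rewrite /S -memv_preim.
have mono k : (S k <= S k.+1)%VS.
  by apply/subvP => v; rewrite !memS lpowS; apply: hK.
have monoij i j : (i <= j)%N -> (S i <= S j)%VS.
  move=> /subnK <-; elim: (j - i)%N => [|d IH]; first exact: subvv.
  by rewrite addSn; apply: subv_trans IH (mono _).
have step k : (S k.+1 <= S k)%VS -> (S k.+2 <= S k.+1)%VS.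
  move=> /subvP h; apply/subvP => v; rewrite memS lpowSr -memS => /h.
  by rewrite !memS lpowSr.
have [k [hk sk]] : exists k, (k <= \dim (fullv : {vspace L}))%N /\ (S k.+1 <= S k)%VS.
  apply: NNPP => hno.
  have hd : forall k, (k <= (\dim (fullv : {vspace L})).+1)%N -> (k <= \dim (S k))%N.
    elim=> [|k IH] hk; first exact: leq0n.
    have hk' : (k <= \dim (fullv : {vspace L}))%N by [].
    have := dimv_leqif_sup (mono k) => /leqifP.
    case: ifP => [h _|_ hlt]; first by case: hno; exists k.
    by apply: leq_ltn_trans hlt; apply: IH; apply: ltnW.
  have := hd _ (leqnn _); have := dimvS (subvf (S (\dim (fullv : {vspace L})).+1)).
  move=> h1 h2; have := leq_trans h2 h1; by rewrite ltnn.
have stay1 : forall d : nat, (S (k + d)%N.+1 <= S (k + d)%N)%VS.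
  elim=> [|d IH]; first by rewrite addn0.
  by rewrite addnS; apply: step.
have stay : forall d : nat, (S (k + d)%N <= S k)%VS.
  elim=> [|d IH]; first by rewrite addn0 subvv.
  by apply: subv_trans IH; rewrite addnS; apply: stay1.
move=> m v; rewrite -!memS => hv.
case: (leqP m NN) => hm; first by apply: (subvP (monoij _ _ hm)).
have kNN : (k <= NN)%N by apply: leq_trans hk _.
apply: (subvP (monoij _ _ kNN)); apply: (subvP (stay (m - k)%N)).
by rewrite subnKC // (leq_trans kNN) // ltnW.
Qed.

Lemma LK (K : {vspace L}) y l m : ideal K -> forall a b u v,
  lpow (Dm y l) a u \in K -> lpow (Dm y m) b v \in K ->
  lpow (Dm y (l + m)) (a + b) (br u v) \in K.
Proof.
move=> hK; elim=> [|a IHa] b u v.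
  rewrite lpow0 => uK _; apply: lpow_inv; first by move=> w; apply: Dm_ideal.
  exact: idealR.
elim: b u v => [|b IHb] u v.
  move=> _; rewrite lpow0 => vK; apply: lpow_inv; first by move=> w; apply: Dm_ideal.
  exact: idealL.
move=> hu hv.
rewrite addnS lpowSr Dm_der linearD rpredD //.
  rewrite addSn -addnS; apply: IHa => //; by rewrite -lpowSr.
by apply: IHb => //; rewrite -lpowSr.
Qed.

Lemma inj_surj f (V K : {vspace L}) : (K <= V)%VS -> (forall v, v \in V -> f v \in V) ->
  (forall v, v \in K -> f v \in K) -> (forall v, v \in V -> f v \in K -> v \in K) ->
  (V <= f @: V + K)%VS.
Proof.
move=> KV fV fK inj.
have sub1 : (f @: V + K <= V)%VS.
  rewrite subv_add KV andbT; apply/subvP => w /memv_imgP[v vV ->]; exact: fV.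
have s2 : (V :&: lker f <= K :&: lker f)%VS.
  apply/subvP => v /memv_capP[vV vk]; rewrite memv_cap vk andbT inj //.
  by move: vk; rewrite memv_ker => /eqP ->; apply: mem0v.
have s3 : (f @: V :&: K <= f @: K)%VS.
  apply/subvP => w /memv_capP[/memv_imgP[v vV ->] fvK]; apply: memv_img; exact: inj.
have e1 := dimv_sum_cap (f @: V) K.
have e2 := limg_ker_dim f V.
have e3 := limg_ker_dim f K.
have i2 := dimvS s2.
have i3 := dimvS s3.
have e4 : (\dim (K :&: lker f) <= \dim K)%N by apply: dimvS; apply: capvSl.
suff: V = (f @: V + K)%VS by move=> {1}->; apply: subvv.
apply/esym/subv_dim_eq => //; lia.
Qed.

Lemma br_sumr n z (c : 'I_n -> F) (w : 'I_n -> L) :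
  br z (\sum_(i < n) c i *: w i) = \sum_(i < n) c i *: br z (w i).
Proof.
elim: n c w => [|n IH] c w; first by rewrite !big_ord0 br0r.
by rewrite !big_ord_recr /= brDr brZr IH.
Qed.
Lemma br_suml n z (c : 'I_n -> F) (w : 'I_n -> L) :
  br (\sum_(i < n) c i *: w i) z = \sum_(i < n) c i *: br (w i) z.
Proof.
elim: n c w => [|n IH] c w; first by rewrite !big_ord0 br0l.
by rewrite !big_ord_recr /= brDl brZl IH.
Qed.

Lemma cent_ex (A B : {vspace L}) : exists Z : {vspace L},
  forall z, z \in Z <-> (forall a, a \in A -> br z a \in B).
Proof.
exists (\bigcap_(i < \dim A) (adr (vbasis A)`_i @^-1: B))%VS => z; split.
  move=> zZ a aA; rewrite (coord_vbasis aA).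
  have -> : br z (\sum_(i < \dim A) coord (vbasis A) i a *: (vbasis A)`_i)
     = \sum_(i < \dim A) coord (vbasis A) i a *: br z (vbasis A)`_i.
    by apply: br_sumr.
  apply: rpred_sum => i _; apply: rpredZ.
  have := bigcapv_inf i (P := xpredT) (Us := fun i => (adr (vbasis A)`_i @^-1: B)%VS) (V := (adr (vbasis A)`_i @^-1: B)%VS) isT (subvv _).
  move/subvP/(_ z zZ); by rewrite -memv_preim adrE.
move=> h; rewrite memvE; apply/subv_bigcapP => i _; rewrite -memvE -memv_preim adrE.
by apply: h; apply: vbasis_mem; apply: mem_nth; rewrite size_tuple.
Qed.

Lemma line_step (A B : {vspace L}) w0 : (A <= B)%VS -> (\dim B <= (\dim A).+1)%N ->
  w0 \in B -> w0 \notin A -> forall w, w \in B -> exists a c, a \in A /\ w = a + c *: w0.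
Proof.
move=> AB dB w0B w0A.
have hE : (A + <[w0]>)%VS = B.
  apply: subv_dim_eq; first by rewrite subv_add AB -memvE.
  have := dimv_sum_cap A <[w0]>.
  have -> : (A :&: <[w0]> = 0)%VS.
    apply/eqP; rewrite -subv0; apply/subvP => v /memv_capP[vA /vlineP[k hk]]; subst v.
    rewrite memv0; case: (eqVneq k 0) => [->|k0]; first by rewrite scale0r.
    by have := memvZ (k^-1) vA; rewrite scalerA mulVf // scale1r (negPf w0A).
  rewrite dimv0 dim_vline addn0.
  have : w0 != 0 by apply: contraNneq w0A => ->; apply: mem0v.
  move=> -> /=; lia.
move=> w; rewrite -hE => /memv_addP[a aA [v /vlineP[c ->] ->]].
by exists a, c.
Qed.

Lemma lpow_Dm_inv (I : {vspace L}) y l m v : ideal I -> v \in I -> lpow (Dm y l) m v \in I.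
Proof. by move=> hI vI; apply: lpow_inv => // w; apply: Dm_ideal. Qed.

Lemma split_lemma (K H : {vspace L}) y (S : F -> Prop) n (Ls : nat -> {vspace L}) (d : nat -> F) :
  ideal K -> ideal H -> (K <= H)%VS -> Ls 0%N = H -> Ls n = fullv%VS ->
  (forall j, (j <= n)%N -> ideal (Ls j)) ->
  (forall j, (j < n)%N -> forall w, w \in Ls j.+1 -> Dm y (d j) w \in Ls j) ->
  (forall j, (j < n)%N -> S (d j)) -> (forall a b, S a -> S b -> S (a + b)) ->
  (forall nu, S nu -> forall a, a \in H -> Dm y nu a \in K -> a \in K) ->
  exists X, [/\ subalg X, (K <= X)%VS, (fullv <= X + H)%VS & (X :&: H <= K)%VS].
Proof.
move=> hK hH KH L0 Ln hLs hD hS Sadd hinj.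
pose Eg l := (lpow (Dm y l) NN @^-1: K)%VS.
have memEg l v : (v \in Eg l) = (lpow (Dm y l) NN v \in K) by rewrite /Eg -memv_preim.
have EgK l : (K <= Eg l)%VS by apply/subvP => v vK; rewrite memEg lpow_Dm_inv.
have Eg_any l m v : lpow (Dm y l) m v \in K -> v \in Eg l.
  by rewrite memEg; apply: stab => w; apply: Dm_ideal.
have Eg_inv l m v : v \in Eg l -> Dm y m v \in Eg l.
  by rewrite !memEg lpow_comm; apply: Dm_ideal.
pose U m := (K + \sum_(j < m) Eg (d j))%VS.
have KU m : (K <= U m)%VS by apply: addvSl.
have EgU m (j : 'I_m) : (Eg (d j) <= U m)%VS.
  by apply: subv_trans (addvSr _ _); apply: (sumv_sup j).
have U_inv m nu v : v \in U m -> Dm y nu v \in U m.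
  move=> vU; rewrite memv_preim; move: v vU; apply/subvP.
  rewrite subv_add; apply/andP; split.
    by apply/subvP => v vK; rewrite -memv_preim (subvP (KU m)) // Dm_ideal.
  apply/subv_sumP => j _; apply/subvP => v vE; rewrite -memv_preim.
  by apply: (subvP (EgU m j)); apply: Eg_inv.
have Upow m nu k v : v \in U m -> lpow (Dm y nu) k v \in U m.
  by move=> vU; apply: lpow_inv => // w; apply: U_inv.
have inj_iter nu k a : S nu -> a \in H -> lpow (Dm y nu) k a \in K -> a \in K.
  move=> Snu; elim: k a => [|k IH] a aH; first by rewrite lpow0.
  rewrite lpowSr => /IH; rewrite Dm_ideal // => /(_ isT); exact: hinj.
have capU : forall m, (m <= n)%N -> forall a, a \in H -> a \in U m -> a \in K.
  elim=> [|m IH] hm a aH.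
    by rewrite /U big_ord0 addv0.
  rewrite /U big_ord_recr /= addvA => /memv_addP[b bU [e eE Ea]]; subst a.
  have Sdm : S (d m) by apply: hS.
  apply: (inj_iter (d m) NN) => //.
  have DaH : lpow (Dm y (d m)) NN (b + e) \in H by apply: lpow_Dm_inv.
  apply: IH => //; first exact: ltnW.
  rewrite linearD /= rpredD //; first exact: (Upow m (d m) NN b bU).
  by apply: (subvP (KU m)); rewrite -memEg.
have surjEg l de : l != de -> (Eg l <= Dm y de @: Eg l + K)%VS.
  move=> hl; apply: inj_surj => //.
  - by move=> v; apply: Eg_inv.
  - by move=> v; apply: Dm_ideal.
  move=> e eE hde.
  have key : forall i, lpow (Dm y l) i e - (- (l - de)) ^+ i *: e \in K.
    elim=> [|i IH]; first by rewrite lpow0 expr0 scale1r subrr mem0v.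
    set ki := lpow (Dm y l) i e - _ in IH.
    have -> : lpow (Dm y l) i.+1 e - (- (l - de)) ^+ i.+1 *: e = Dm y l ki + (- (l - de)) ^+ i *: Dm y de e.
      rewrite lpowS.
      have -> : lpow (Dm y l) i e = ki + (- (l - de)) ^+ i *: e by rewrite subrK.
      rewrite DmD DmZ (Dm_shift y de l e) scalerDr scalerA exprSr !opprB.
      by rewrite addrA addrK.
    by rewrite rpredD ?memvZ // Dm_ideal.
  have hN := key NN; rewrite memEg in eE.
  have := memvB eE hN; rewrite opprB addrC subrK => ceK.
  have c0 : (- (l - de)) ^+ NN != 0 by rewrite expf_neq0 // oppr_eq0 subr_eq0.
  by have := memvZ ((- (l - de)) ^+ NN)^-1 ceK; rewrite scalerA mulVf // scale1r.
have span : forall j, (j <= n)%N -> (Ls j <= U n + H)%VS.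
  elim=> [|j IH] hj; first by rewrite L0 addvSr.
  have hjn : (j < n)%N by [].
  set de := d j.
  have Sde : S de by apply: hS.
  have surjU : (U n <= Dm y de @: U n + Eg de)%VS.
    rewrite subv_add; apply/andP; split.
      by apply: subv_trans (EgK de) (addvSr _ _).
    apply/subv_sumP => k _.
    case: (eqVneq (d k) de) => [->|hne]; first exact: addvSr.
    apply: subv_trans (surjEg _ _ hne) _.
    rewrite subv_add; apply/andP; split.
      by apply: subv_trans (addvSl _ _); apply: limgS; apply: EgU.
    by apply: subv_trans (EgK de) (addvSr _ _).
  have surjH : (H <= Dm y de @: H + K)%VS.
    apply: inj_surj => //.
    - by move=> v; apply: Dm_ideal.
    - by move=> v; apply: Dm_ideal.
    by apply: hinj.
  apply/subvP => w wL.
  have : Dm y de w \in (U n + H)%VS by apply: (subvP (IH (ltnW hj))); apply: hD.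
  case/memv_addP => u uU [h hhH Eh].
  have /memv_addP[u1 /memv_imgP[u' u'U ->] [e eE Eu]] := subvP surjU u uU.
  have /memv_addP[h1 /memv_imgP[h' h'H ->] [k kK Eh1]] := subvP surjH h hhH.
  have wE : w = (w - u' - h') + (u' + h') by rewrite addrA addrAC !subrK.
  rewrite wE addrA; apply: memv_add; last exact: h'H.
  apply: memvD; last exact: u'U.
  have : w - u' - h' \in Eg de.
    apply: (Eg_any de NN.+1); rewrite lpowSr -memEg.
    have -> : Dm y de (w - u' - h') = e + k.
      by rewrite !DmB Eh Eu Eh1 zmod_hlp.
    by rewrite rpredD // (subvP (EgK de)).
  by apply: (subvP (EgU n (Ordinal hjn))).
have full : (fullv <= U n + H)%VS by rewrite -Ln; apply: span.
have anyU : forall nu, S nu -> forall m v, lpow (Dm y nu) m v \in K -> v \in U n.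
  move=> nu Snu m v hv.
  have /memv_addP[u uU [h hhH Ev]] := subvP full v (memvf v).
  have hK' : h \in K.
    apply: (inj_iter nu m) => //.
    apply: (capU n (leqnn n)); first exact: lpow_Dm_inv.
    have -> : lpow (Dm y nu) m h = lpow (Dm y nu) m v - lpow (Dm y nu) m u.
      by rewrite Ev linearD /= addrC addKr.
    by apply: memvB; [exact: (subvP (KU n)) | exact: (Upow n nu m u uU)].
  by rewrite Ev memvD // (subvP (KU n)).
have stepA : forall (j : 'I_n) e, e \in Eg (d j) -> forall v, v \in U n -> br e v \in U n.
  move=> j e eE v vU; rewrite -adlE memv_preim; move: v vU; apply/subvP.
  rewrite subv_add; apply/andP; split.
    by apply/subvP => v vK; rewrite -memv_preim adlE (subvP (KU n)) // idealL.
  apply/subv_sumP => k _; apply/subvP => v vE; rewrite -memv_preim adlE.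
  apply: (anyU (d j + d k) _ (NN + NN)); first by apply: Sadd; apply: hS.
  by apply: LK => //; rewrite -memEg.
have subU : subalg (U n).
  move=> u v uU vU; rewrite -adrE memv_preim; move: u uU; apply/subvP.
  rewrite subv_add; apply/andP; split.
    by apply/subvP => u uK; rewrite -memv_preim adrE (subvP (KU n)) // idealR.
  apply/subv_sumP => k _; apply/subvP => u uE; rewrite -memv_preim adrE.
  exact: stepA uE v vU.
exists (U n); split=> //.
apply/subvP => a /memv_capP[aU aH]; exact: (capU n (leqnn n)).
Qed.

Lemma Dm0E x v : Dm x 0 v = br x v.
Proof. by rewrite DmE scale0r subr0. Qed.

Lemma subalg_line (T : {vspace L}) s : subalg T -> (forall t, t \in T -> br t s \in T) ->
  subalg (T + <[s]>)%VS.
Proof.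
move=> hT hs u v /memv_addP[t1 t1T [x1 /vlineP[a ->] ->]] /memv_addP[t2 t2T [x2 /vlineP[b ->] ->]].
rewrite brDl brZl !brDr !brZr brxx scaler0 addr0.
apply: (subvP (addvSl T <[s]>)).
apply: rpredD; first apply: rpredD; first exact: hT.
  by apply: rpredZ; apply: hs.
by apply: rpredZ; rewrite brC memvN; apply: hs.
Qed.

Lemma engel (K H : {vspace L}) : ideal K -> (K <= H)%VS ->
  (forall x, x \in H -> forall v, lpow (Dm x 0) NN v \in K) ->
  forall S : {vspace L}, subalg S -> (K <= S)%VS -> (S <= H)%VS ->
  forall W K0 : {vspace L}, (K <= K0)%VS -> ~ (W <= K0)%VS ->
  (forall s w, s \in S -> w \in W -> br s w \in W) ->
  (forall s k, s \in S -> k \in K0 -> br s k \in K0) ->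
  (forall k w, k \in K -> w \in W -> br k w \in K0) ->
  exists v, [/\ v \in W, v \notin K0 & forall s, s \in S -> br s v \in K0].
Proof.
move=> hK KH nil S.
suff: forall m (S : {vspace L}), (\dim S < m)%N -> subalg S -> (K <= S)%VS -> (S <= H)%VS ->
  forall W K0 : {vspace L}, (K <= K0)%VS -> ~ (W <= K0)%VS ->
  (forall s w, s \in S -> w \in W -> br s w \in W) ->
  (forall s k, s \in S -> k \in K0 -> br s k \in K0) ->
  (forall k w, k \in K -> w \in W -> br k w \in K0) ->
  exists v, [/\ v \in W, v \notin K0 & forall s, s \in S -> br s v \in K0].
  by move=> h; apply: (h (\dim S).+1).
elim=> [|m IH] {}S // hm hS KS SH W K0 KK0 WK0 hSW hSK0 hKW.
case: (boolP (S <= K)%VS) => SK.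
  have /subvPn[v vW vK0] : ~~ (W <= K0)%VS by apply/negP.
  by exists v; split=> // s sS; apply: hKW => //; apply: (subvP SK).
have KneS : K <> S by move=> e; move: SK; rewrite e subvv.
have [T [[hT KT TS TneS] Tmax]] := vs_max
  (P := fun V => [/\ subalg V, (K <= V)%VS, (V <= S)%VS & V <> S])
  (ex_intro _ K (And4 (ideal_sub hK) (subvv K) KS KneS)).
have dT : (\dim T < \dim S)%N.
  rewrite ltn_neqAle dimvS // andbT; apply/negP => /eqP hd; apply: TneS.
  by apply: subv_dim_eq => //; rewrite hd.
have TH : (T <= H)%VS by apply: subv_trans SH.
have [s [sS sT hsT]] : exists s, [/\ s \in S, s \notin T & forall t, t \in T -> br t s \in T].
  apply: (IH T) => //.
  - exact: leq_trans dT hm.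
  - by move=> ST; apply: TneS; apply: subv_anti; rewrite TS ST.
  - by move=> k w kK wS; exact: (hS k w (subvP TS k kK) wS).
  - by move=> k w kK wS; apply: (subvP KT); apply: idealR.
have ST : (S <= T + <[s]>)%VS.
  case: (classic (T + <[s]> = S)%VS) => [->|hne]; first exact: subvv.
  exfalso.
  have PT' : [/\ subalg (T + <[s]>)%VS, (K <= T + <[s]>)%VS, (T + <[s]> <= S)%VS & (T + <[s]>)%VS <> S].
    split=> //.
    - exact: subalg_line.
    - exact: subv_trans KT (addvSl _ _).
    - by rewrite subv_add TS -memvE.
  have := Tmax _ PT'.
  have := subv_dim_eq (addvSl T <[s]>) => h1 h2.
  move: sT; rewrite (h1 h2) => /negP; apply; apply: (subvP (addvSr T _)); exact: memv_line.
have [v0 [v0W v0K0 hv0]] : exists v0, [/\ v0 \in W, v0 \notin K0 & forall t, t \in T -> br t v0 \in K0].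
  apply: (IH T) => //.
  - exact: leq_trans dT hm.
  - by move=> t w tT wW; exact: (hSW t w (subvP TS t tT) wW).
  - by move=> t k tT kK; exact: (hSK0 t k (subvP TS t tT) kK).
pose vi i := lpow (Dm s 0) i v0.
have viW i : vi i \in W.
  elim: i => [|i IHi]; first by rewrite /vi lpow0.
  by rewrite /vi lpowS Dm0E; apply: hSW.
have viT i : forall t, t \in T -> br t (vi i) \in K0.
  elim: i => [|i IHi] t tT; first by rewrite /vi lpow0; apply: hv0.
  rewrite /vi lpowS Dm0E jacobi rpredD //; first exact: (IHi _ (hsT t tT)).
  exact: (hSK0 s _ sS (IHi t tT)).
have viN : vi NN \in K0 by apply: (subvP KK0); apply: nil; apply: (subvP SH).
have vi0 : vi 0%N \notin K0 by rewrite /vi lpow0.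
have [i [_ [hi hi1]]] := first_fail (P := fun i => vi i \notin K0) vi0 (fun h => negP h viN).
have hi1' : vi i.+1 \in K0 by apply: NNPP => h; apply: hi1; apply/negP.
exists (vi i); split=> // x /(subvP ST) /memv_addP[t tT [z /vlineP[c ->] ->]].
rewrite brDl brZl rpredD ?viT // rpredZ //.
by move: hi1'; rewrite /vi lpowS Dm0E.
Qed.

Lemma frat_nil (K H : {vspace L}) : ideal K -> ideal H -> (K <= H)%VS ->
  (forall X, subalg X -> (K <= X)%VS -> (fullv <= X + H)%VS -> X = fullv%VS) ->
  forall x, x \in H -> forall v, lpow (Dm x 0) NN v \in K.
Proof.
move=> hK hH KH FP x xH.
pose g := lpow (Dm x 0) NN.
pose E := (g @^-1: K)%VS.
have memE v : (v \in E) = (g v \in K) by rewrite /E -memv_preim.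
have stabE m v : lpow (Dm x 0) m v \in K -> v \in E.
  by rewrite memE; apply: stab => w; apply: Dm_ideal.
have gK v : v \in K -> g v \in K by move=> vK; apply: lpow_Dm_inv.
have subE : subalg E.
  move=> u v; rewrite !memE => hu hv; rewrite -memE; apply: (stabE (NN + NN)%N).
  by have := @LK K x 0 0 hK NN NN u v hu hv; rewrite addr0.
have KE : (K <= E)%VS by apply/subvP => v vK; rewrite memE gK.
pose R := (g @: fullv + K)%VS.
have RH : (R <= H)%VS.
  rewrite subv_add KH andbT; apply/subvP => w /memv_imgP[v _ ->].
  by rewrite /g /NN lpowS Dm0E idealR.
have hR : (R <= g @: R + K)%VS.
  apply: inj_surj => //; first exact: addvSr.
  - move=> r /memv_addP[u /memv_imgP[w _ ->] [k kK ->]].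
    by rewrite linearD /= memv_add ?gK // memv_img ?memvf.
  move=> r /memv_addP[u /memv_imgP[w _ ->] [k kK ->]].
  rewrite linearD /= => h.
  have : g (g w) \in K by rewrite -[g (g w)](addrK (g k)) memvB // gK.
  rewrite /g -lpow_add => /stabE; rewrite memE => gwK.
  by rewrite memvD.
suff: E = fullv%VS by move=> hE v; rewrite -memE hE memvf.
apply: FP => //.
apply/subvP => v _.
have gvR : g v \in R by rewrite -[g v]addr0; apply: memv_add; [apply: memv_img; apply: memvf | apply: mem0v].
have /memv_addP[u /memv_imgP[r rR ->] [k kK hgv]] := subvP hR _ gvR.
have vE : v - r \in E by rewrite memE linearB /= hgv addrC addKr.
by rewrite -[v](subrK r) memv_add // (subvP RH).
Qed.

Lemma dim_add_line (A : {vspace L}) w : w \notin A -> \dim (A + <[w]>)%VS = (\dim A).+1.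
Proof.
move=> wA.
have := dimv_sum_cap A <[w]>.
have -> : (A :&: <[w]> = 0)%VS.
  apply/eqP; rewrite -subv0; apply/subvP => v /memv_capP[vA /vlineP[k hk]]; subst v.
  rewrite memv0; case: (eqVneq k 0) => [->|k0]; first by rewrite scale0r.
  by have := memvZ (k^-1) vA; rewrite scalerA mulVf // scale1r (negPf wA).
rewrite dimv0 dim_vline addn0.
have : w != 0 by apply: contraNneq wA => ->; apply: mem0v.
by move=> -> /=; rewrite addn1.
Qed.

Lemma char_br (A B : {vspace L}) : ideal A -> ideal B -> (A <= B)%VS -> (\dim B <= (\dim A).+1)%N ->
  forall u v w, w \in B -> br (br u v) w \in A.
Proof.
move=> hA hB AB dB u v w wB.
case: (boolP (B <= A)%VS) => BA; first exact: (idealL (br u v) hA (subvP BA _ wB)).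
have /subvPn[w0 w0B w0A] := BA.
have ls := line_step AB dB w0B w0A.
have [a [c [aA ->]]] := ls w wB.
rewrite brDr brZr rpredD ?idealL // rpredZ //.
have [au [cu [auA Eu]]] := ls _ (idealL u hB w0B).
have [av [cv [avA Ev]]] := ls _ (idealL v hB w0B).
have -> : br (br u v) w0 = br u (br v w0) - br v (br u w0).
  by rewrite jacobi addrK.
rewrite Ev Eu !brDr !brZr Eu Ev.
rewrite !scalerDr !scalerA mulrC.
have -> : forall (p q r s t : L), p + (q + r) - (s + (t + r)) = (p + q) - (s + t).
  by move=> p q r s t; rewrite !addrA opprD addrACA subrr addr0.
by rewrite memvB // memvD // ?idealL // rpredZ.
Qed.

Lemma eig_step (A B : {vspace L}) y : ideal A -> ideal B -> (A <= B)%VS -> (\dim B <= (\dim A).+1)%N ->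
  exists d, forall w, w \in B -> Dm y d w \in A.
Proof.
move=> hA hB AB dB.
case: (boolP (B <= A)%VS) => BA.
  by exists 0 => w wB; apply: Dm_ideal => //; apply: (subvP BA).
have /subvPn[w0 w0B w0A] := BA.
have ls := line_step AB dB w0B w0A.
have [a [c [aA Ey]]] := ls _ (idealL y hB w0B).
exists c => w wB; have [a' [c' [a'A ->]]] := ls w wB.
rewrite DmD DmZ rpredD ?Dm_ideal // rpredZ //.
by rewrite DmE Ey addrK.
Qed.

Definition Lp := (\sum_(i < \dim {:L}) \sum_(j < \dim {:L})
   <[br (vbasis fullv)`_i (vbasis fullv)`_j]>)%VS.

Lemma br_Lp u v : br u v \in Lp.
Proof.
have hb w : w = \sum_(i < \dim {:L}) coord (vbasis fullv) i w *: (vbasis fullv)`_i.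
  exact: coord_vbasis (memvf w).
rewrite (hb u) br_suml; apply: rpred_sum => i _; apply: rpredZ.
rewrite (hb v) br_sumr; apply: rpred_sum => j _; apply: rpredZ.
apply: (subvP (sumv_sup i (P := xpredT) (Vs := fun i => (\sum_(j < \dim {:L}) <[br (vbasis fullv)`_i (vbasis fullv)`_j]>)%VS) isT (subvv _))).
apply: (subvP (sumv_sup j (P := xpredT) (Vs := fun j => <[br (vbasis fullv)`_i (vbasis fullv)`_j]>%VS) isT (subvv _))).
exact: memv_line.
Qed.

Lemma Lp_sub (Z : {vspace L}) : (forall u v, br u v \in Z) -> (Lp <= Z)%VS.
Proof.
move=> h; apply/subv_sumP => i _; apply/subv_sumP => j _; rewrite -memvE; exact: h.
Qed.

Lemma ideal_Lp : ideal Lp.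
Proof. by apply: ideal_l => x u _; apply: br_Lp. Qed.

Definition wchain (K X : {vspace L}) := exists n (Ls : nat -> {vspace L}),
  [/\ Ls 0%N = K, Ls n = X, forall i, (i <= n)%N -> ideal (Ls i)
    & forall i, (i < n)%N -> (Ls i <= Ls i.+1)%VS /\ (\dim (Ls i.+1) <= (\dim (Ls i)).+1)%N].

Lemma chain_mono n (Ls : nat -> {vspace L}) :
  (forall i, (i < n)%N -> (Ls i <= Ls i.+1)%VS) ->
  forall i j, (i <= j)%N -> (j <= n)%N -> (Ls i <= Ls j)%VS.
Proof.
move=> h i j /subnK <-; elim: (j - i)%N => [|d IH] hn; first by rewrite add0n subvv.
rewrite addSn in hn *; apply: subv_trans (IH (ltnW hn)) (h _ hn).
Qed.

Lemma chain_cap n (Ls : nat -> {vspace L}) (I : {vspace L}) :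
  (forall i, (i < n)%N -> (Ls i <= Ls i.+1)%VS /\ (\dim (Ls i.+1) <= (\dim (Ls i)).+1)%N) ->
  forall i, (i < n)%N -> (Ls i :&: I <= Ls i.+1 :&: I)%VS /\
     (\dim (Ls i.+1 :&: I) <= (\dim (Ls i :&: I)).+1)%N.
Proof.
move=> h i hi; have [s1 d1] := h i hi.
split; first by apply: capvS.
have e := dimv_sum_cap (Ls i) (Ls i.+1 :&: I).
have : (\dim (Ls i + Ls i.+1 :&: I) <= \dim (Ls i.+1))%N.
  by apply: dimvS; rewrite subv_add s1 capvSl.
rewrite capvA (capv_idPl s1) in e.
lia.
Qed.

Lemma wchain_strict K X : wchain K X -> exists n (Ls : nat -> {vspace L}),
  [/\ Ls 0%N = K, Ls n = X, forall i, (i <= n)%N -> ideal (Ls i)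
    & forall i, (i < n)%N -> (Ls i <= Ls i.+1)%VS /\ \dim (Ls i.+1) = (\dim (Ls i)).+1].
Proof.
case=> n; elim: n K => [|n IH] K [Ls [L0 Ln hI hS]].
  by exists 0%N, Ls; split=> // i; rewrite ltn0.
have [m [Ms [M0 Mn hMI hMS]]] : exists m (Ms : nat -> {vspace L}),
  [/\ Ms 0%N = Ls 1%N, Ms m = X, forall i, (i <= m)%N -> ideal (Ms i)
    & forall i, (i < m)%N -> (Ms i <= Ms i.+1)%VS /\ \dim (Ms i.+1) = (\dim (Ms i)).+1].
  apply: (IH (Ls 1%N)); exists (fun i => Ls i.+1); split=> // i hi.
    exact: hI.
  exact: hS.
have [s01 d01] := hS 0%N isT.
case: (eqVneq (Ls 1%N) K) => [e|ne].
  by exists m, Ms; split=> //; rewrite M0 e.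
exists m.+1, (fun i => if i is i'.+1 then Ms i' else K); split=> //.
- by case=> [|i] hi; [rewrite -L0; apply: hI | apply: hMI].
case=> [|i] hi; last exact: hMS.
rewrite M0 -L0; split=> //; apply/eqP; rewrite eqn_leq d01 /=.
rewrite ltnNge; apply/negP => hd; move: ne; by rewrite -L0 (subv_dim_eq s01 hd) eqxx.
Qed.

Lemma chief_nonfrat (Heta : forall M, maximal_subalgebra br M -> ideal_index_is br M 1)
  (K H M : {vspace L}) : ideal K -> ideal H -> (K <= H)%VS ->
  (forall J, ideal J -> (K <= J)%VS -> (J <= H)%VS -> J = K \/ J = H) ->
  maximal_subalgebra br M -> (K <= M)%VS -> ~ (H <= M)%VS -> \dim H = (\dim K).+1.
Proof.
move=> hK hH KH chief hM KM HM.
have [C [[hC CH CM] Cmin]] := vs_min (P := fun V => [/\ ideal V, (V <= H)%VS & ~ (V <= M)%VS])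
  (ex_intro _ H (And3 hH (subvv H) HM)).
have compl : ideal_completion br M C.
  split=> //; split; first exact: ideal_sub.
    by apply/negP.
  move=> I _ IC IneC hI; apply: NNPP => IM.
  have := Cmin I (And3 hI (subv_trans IC CH) IM) => hd.
  by move/negP: IneC; apply; apply/eqP/subv_dim_eq.
have [S [hS sc]] := strict_core_ex C.
have eta := Heta M hM C S compl sc.
have [sc1 sc2] := sc.
have SC : (S <= C)%VS by apply: sc2 => I _ IC _.
have SM : (S <= M)%VS by apply: sc2 => I hI IC IneC; case: compl => [[_ _ h] _]; apply: h => //; apply: ideal_sub.
have CKS : (C :&: K <= S)%VS.
  apply: sc1; first exact: ideal_cap.
    exact: capvSl.
  apply/negP => /eqP e; apply: CM; rewrite -e; apply: subv_trans (capvSr _ _) KM.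
have SK : (S <= K)%VS.
  case: (chief (S + K)%VS (ideal_add hS hK) (addvSr _ _)).
  - by rewrite subv_add KH (subv_trans SC CH).
  - by move=> e; rewrite -e addvSl.
  - by move=> e; exfalso; apply: HM; rewrite -e subv_add SM KM.
have eS : (C :&: K)%VS = S by apply: subv_anti; rewrite CKS subv_cap SC SK.
have eH : (C + K)%VS = H.
  case: (chief (C + K)%VS (ideal_add hC hK) (addvSr _ _)) => //.
  - by rewrite subv_add CH KH.
  - by move=> e; exfalso; apply: CM; apply: subv_trans KM; rewrite -e addvSl.
have := dimv_sum_cap C K; rewrite eH eS.
have := dimvS SC; move: eta; lia.
Qed.

Lemma chief_frat (K H : {vspace L}) : ideal K -> ideal H -> (K <= H)%VS -> K <> H ->
  (forall J, ideal J -> (K <= J)%VS -> (J <= H)%VS -> J = K \/ J = H) ->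
  wchain H fullv ->
  (forall M, maximal_subalgebra br M -> (K <= M)%VS -> (H <= M)%VS) ->
  \dim H = (\dim K).+1.
Proof.
move=> hK hH KH KneH chief [n [Ls [L0 Ln hLs hLS]]] FR.
have HK : ~ (H <= K)%VS by move=> HK; apply: KneH; apply: subv_anti; rewrite KH HK.
have FP : forall X, subalg X -> (K <= X)%VS -> (fullv <= X + H)%VS -> X = fullv%VS.
  move=> X hX KX XH; apply: NNPP => Xf.
  have [M [hM XM]] := max_above hX (introN eqP Xf).
  have HM := FR M hM (subv_trans KX XM).
  case: hM => _ /negP Mf _; apply: Mf; apply/eqP; apply: subv_anti; rewrite subvf /=.
  by apply: subv_trans XH _; rewrite subv_add XM HM.
have nil := frat_nil hK hH KH FP.
have [v [vH vK hv]] : exists v, [/\ v \in H, v \notin K & forall s, s \in H -> br s v \in K].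
  apply: (engel hK KH nil (ideal_sub hH) KH (subvv H) (subvv K) HK).
  - by move=> s w sH wH; apply: idealL.
  - by move=> s k _ kK; apply: idealL.
  - by move=> k w kK _; apply: idealR.
have [C0 hC0] := cent_ex H K.
have abel : forall a b, a \in H -> b \in H -> br a b \in K.
  have hZ : ideal (H :&: C0)%VS.
    apply: ideal_l => x a /memv_capP[aH /hC0 aC]; rewrite memv_cap idealL //=.
    apply/hC0 => h hh.
    rewrite brC memvN jacobi; apply: memvD.
      by rewrite brC memvN; apply: aC; exact: (idealR x hH hh).
    apply: (idealL x hK); rewrite brC memvN; exact: aC.
  case: (chief _ hZ).
  - by apply/subvP => k kK; rewrite memv_cap (subvP KH) //=; apply/hC0 => a _; apply: idealR.
  - exact: capvSl.
  - move=> e; exfalso; move/negP: vK; apply; rewrite -e memv_cap vH /=.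
    by apply/hC0 => a aH; rewrite brC memvN hv.
  move=> e a b aH bH; have : a \in (H :&: C0)%VS by rewrite e.
  by case/memv_capP => _ /hC0; apply.
have HC0 : (H <= C0)%VS by apply/subvP => a aH; apply/hC0 => b bH; apply: abel.
have Lmono := chain_mono (n := n) (Ls := Ls) (fun i hi => (hLS i hi).1).
have HLs j : (j <= n)%N -> (H <= Ls j)%VS by move=> hj; rewrite -L0; apply: Lmono.
case: (classic (Lp <= C0)%VS) => LpC.
  case: (classic (forall z, exists l, forall a, a \in H -> br z a - l *: a \in K)) => [scal|nscal].
    have /subvPn[h0 h0H h0K] : ~~ (H <= K)%VS by apply/negP.
    have hV : ideal (K + <[h0]>)%VS.
      apply: ideal_l => x w /memv_addP[k kK [u /vlineP[c ->] ->]].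
      rewrite brDr brZr.
      have [l hl] := scal x.
      have -> : br x k + c *: br x h0 = (br x k + c *: (br x h0 - l *: h0)) + (c * l) *: h0.
        by rewrite scalerBr !scalerA -addrA subrK.
      apply: memv_add; last by apply: memvZ; apply: memv_line.
      by apply: memvD; [apply: idealL | apply: memvZ; apply: hl].
    have VH : (K + <[h0]> <= H)%VS by rewrite subv_add KH -memvE.
    case: (chief _ hV (addvSl _ _) VH) => e.
      by exfalso; move/negP: h0K; apply; rewrite -e; apply: (subvP (addvSr K _)); apply: memv_line.
    by rewrite -e dim_add_line.
  exfalso.
  have [y hy] : exists y, forall l, ~ (forall a, a \in H -> br y a - l *: a \in K).
    apply: NNPP => h; apply: nscal => z; apply: NNPP => hz; apply: h; exists z => l hl.
    by apply: hz; exists l.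
  have inj : forall nu a, a \in H -> Dm y nu a \in K -> a \in K.
    move=> nu.
    have hKr : ideal (H :&: (Dm y nu @^-1: K))%VS.
      apply: ideal_l => x a /memv_capP[aH]; rewrite -!memv_preim => aK.
      rewrite memv_cap idealL //= -memv_preim.
      rewrite -[nu]add0r Dm_der Dm0E; apply: memvD; last exact: idealL.
      by have /hC0 := subvP LpC _ (br_Lp y x); apply.
    case: (chief _ hKr).
    - by apply/subvP => k kK; rewrite memv_cap (subvP KH) //= -memv_preim Dm_ideal.
    - exact: capvSl.
    - move=> e a aH haK; have : a \in (H :&: (Dm y nu @^-1: K))%VS.
        by rewrite memv_cap aH -memv_preim.
      by rewrite e.
    move=> e; exfalso; apply: (hy nu) => a aH.
    have : a \in (H :&: (Dm y nu @^-1: K))%VS by rewrite e.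
    by case/memv_capP => _; rewrite -memv_preim DmE.
  have hex : forall j, exists d, (j < n)%N -> forall w, w \in Ls j.+1 -> Dm y d w \in Ls j.
    move=> j; case: (ltnP j n) => hj; last by exists 0.
    have [s1 d1] := hLS j hj.
    have [d hd] := eig_step y (hLs j (ltnW hj)) (hLs j.+1 hj) s1 d1.
    by exists d.
  pose d j := proj1_sig (constructive_indefinite_description _ (hex j)).
  have hd j : (j < n)%N -> forall w, w \in Ls j.+1 -> Dm y (d j) w \in Ls j.
    exact: (proj2_sig (constructive_indefinite_description _ (hex j))).
  have [X [hX KX XH XcH]] := @split_lemma K H y (fun _ => True) n Ls d hK hH KH L0 Ln hLs hd
    (fun _ _ => I) (fun _ _ _ _ => I) (fun nu _ => inj nu).
  apply: HK; have := FP X hX KX XH => eX.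
  by apply: subv_trans XcH; rewrite eX capfv subvv.
exfalso.
pose I0 := (H + Lp)%VS.
have hI : ideal I0 by apply: ideal_add => //; apply: ideal_Lp.
pose Is j := (Ls j :&: I0)%VS.
have Is0 : Is 0%N = H by rewrite /Is L0; apply/capv_idPl; apply: addvSl.
have Isn : Is n = I0 by rewrite /Is Ln capfv.
have hIS := chain_cap I0 hLS.
have hIsI j : (j <= n)%N -> ideal (Is j) by move=> hj; apply: ideal_cap => //; apply: hLs.
have P0 : (Is 0%N <= C0)%VS by rewrite Is0.
have Pn : ~ (Is n <= C0)%VS by rewrite Isn => h; apply: LpC; apply: subv_trans h; apply: addvSr.
have [j [hj [Pj nPj]]] := first_fail (P := fun j => (Is j <= C0)%VS) P0 Pn.
have /subvPn[y yI yC] : ~~ (Is j.+1 <= C0)%VS by apply/negP.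
have yIs : y \notin Is j by apply/negP => h; move/negP: yC; apply; exact: (subvP Pj _ h).
have [s1 d1] := hIS j hj.
have ls := line_step s1 d1 yI yIs.
have inj0 : forall a, a \in H -> Dm y 0 a \in K -> a \in K.
  have hKr : ideal (H :&: (Dm y 0 @^-1: K))%VS.
    apply: ideal_l => x a /memv_capP[aH]; rewrite -!memv_preim => aK.
    rewrite memv_cap idealL //= -memv_preim.
    have := Dm_der y 0 0 x a; rewrite addr0 => ->; apply: memvD; last exact: idealL.
    have [i [c [iIs Exy]]] := ls _ (idealR x (hIsI _ hj) yI).
    rewrite Dm0E Exy brDl brZl; apply: memvD.
      by have /hC0 := subvP Pj _ iIs; apply.
    by apply: memvZ; rewrite -Dm0E.
  case: (chief _ hKr).
  - by apply/subvP => k kK; rewrite memv_cap (subvP KH) //= -memv_preim Dm_ideal.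
  - exact: capvSl.
  - move=> e a aH haK; have : a \in (H :&: (Dm y 0 @^-1: K))%VS.
      by rewrite memv_cap aH -memv_preim.
    by rewrite e.
  move=> e; exfalso; move/negP: yC; apply; apply/hC0 => a aH.
  have : a \in (H :&: (Dm y 0 @^-1: K))%VS by rewrite e.
  by case/memv_capP => _; rewrite -memv_preim Dm0E.
have hd : forall j', (j' < n)%N -> forall w, w \in Ls j'.+1 -> Dm y 0 w \in Ls j'.
  move=> j' hj' w hw.
  have yI0 : y \in I0 by apply: (subvP (capvSr _ _)) yI.
  have [h hh [p hp ->]] := memv_addP yI0.
  have [s1' d1'] := hLS j' hj'.
  rewrite Dm0E brDl; apply: memvD.
    by apply: (subvP (HLs j' (ltnW hj'))); apply: idealR.
  have [W hW] := cent_ex (Ls j'.+1) (Ls j').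
  have LpW : (Lp <= W)%VS.
    apply: Lp_sub => u1 v1; apply/hW => a ha.
    exact: (char_br (hLs j' (ltnW hj')) (hLs j'.+1 hj') s1' d1').
  by have /hW := subvP LpW _ hp; apply.
have Sadd : forall a b : F, a = 0 -> b = 0 -> a + b = 0 by move=> a b -> ->; rewrite addr0.
have Sinj : forall nu : F, nu = 0 -> forall a, a \in H -> Dm y nu a \in K -> a \in K.
  by move=> nu ->; exact: inj0.
have [X [hX KX XH XcH]] := @split_lemma K H y (fun nu => nu = 0) n Ls (fun _ => 0) hK hH KH L0 Ln hLs hd
  (fun _ _ => erefl) Sadd Sinj.
apply: HK; have := FP X hX KX XH => eX.
by apply: subv_trans XcH; rewrite eX capfv subvv.
Qed.

Lemma all_chains (Heta : forall M, maximal_subalgebra br M -> ideal_index_is br M 1) :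
  forall K, ideal K -> wchain K fullv.
Proof.
suff: forall m K, (\dim (fullv : {vspace L}) - \dim K < m)%N -> ideal K -> wchain K fullv.
  by move=> h K; apply: (h (\dim (fullv : {vspace L}) - \dim K).+1).
elim=> [|m IH] K // hm hK.
case: (classic (K = fullv%VS)) => Kf.
  by exists 0%N, (fun _ => K); split=> // i; rewrite ltn0.
have [H [[hH KH HneK] Hmin]] := vs_min (P := fun V => [/\ ideal V, (K <= V)%VS & V <> K])
  (ex_intro _ fullv%VS (And3 idealf (subvf K) (fun e => Kf (esym e)))).
have chief : forall J, ideal J -> (K <= J)%VS -> (J <= H)%VS -> J = K \/ J = H.
  move=> J hJ KJ JH; case: (classic (J = K)) => [e|ne]; [by left | right].
  by apply: subv_dim_eq => //; apply: Hmin.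
have dKH : (\dim K < \dim H)%N.
  rewrite ltnNge; apply/negP => hd; apply: HneK; apply/esym; exact: subv_dim_eq.
have hHc : wchain H fullv.
  apply: IH => //.
  have := dimvS (subvf H); lia.
have dH : \dim H = (\dim K).+1.
  case: (classic (exists M, [/\ maximal_subalgebra br M, (K <= M)%VS & ~ (H <= M)%VS])).
    by case=> M [hM KM HM]; apply: (chief_nonfrat Heta hK hH KH chief hM KM HM).
  move=> hno; apply: (chief_frat hK hH KH (fun e => HneK (esym e)) chief hHc).
  move=> M hM KM; apply: NNPP => HM; apply: hno; by exists M.
case: hHc => n [Ls [L0 Ln hLs hLS]].
exists n.+1, (fun i => if i is i'.+1 then Ls i' else K); split=> //.
- by case=> [|i] hi //; apply: hLs.
case=> [|i] hi; last exact: hLS.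
by rewrite L0 dH KH leqnn.
Qed.

Lemma dir2 (Heta : forall M, maximal_subalgebra br M -> ideal_index_is br M 1) :
  supersolvable br.
Proof. exact: wchain_strict (all_chains Heta ideal0). Qed.

Lemma dir1 : supersolvable br -> forall M, maximal_subalgebra br M -> ideal_index_is br M 1.
Proof.
case=> n [Ls [L0 Ln hLs hLS]] M hM C Kc [[hCs CM hCI] hC] [sc1 sc2].
have KcC : (Kc <= C)%VS by apply: sc2 => I _ IC _.
have KcM : (Kc <= M)%VS by apply: sc2 => I hI IC IneC; apply: hCI => //; apply: ideal_sub.
have hLSw : forall i, (i < n)%N -> (Ls i <= Ls i.+1)%VS /\ (\dim (Ls i.+1) <= (\dim (Ls i)).+1)%N.
  by move=> i hi; have [a b] := hLS i hi; split=> //; rewrite b.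
have Cn : (C <= Ls n)%VS by rewrite Ln subvf.
have [i0 [[hi0 Ci0] i0min]] := nat_min (P := fun i => (i <= n)%N /\ (C <= Ls i)%VS)
  (ex_intro _ n (conj (leqnn n) Cn)).
case: i0 hi0 Ci0 i0min => [|i] hi Ci imin.
  by exfalso; move/negP: CM; apply; apply: subv_trans Ci _; rewrite L0 sub0v.
have [_ hd] := chain_cap C hLSw hi.
rewrite (capv_idPr Ci) in hd.
have IKc : (Ls i :&: C <= Kc)%VS.
  apply: sc1; first by apply: ideal_cap => //; apply: hLs; apply: ltnW.
    exact: capvSr.
  apply/negP => /eqP e.
  have Ci' : (C <= Ls i)%VS by rewrite -e capvSl.
  have := imin i (conj (ltnW hi) Ci'); by rewrite ltnn.
have dK := dimvS IKc.
have : (\dim Kc < \dim C)%N.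
  rewrite ltnNge; apply/negP => h; move/negP: CM; apply.
  by rewrite -(subv_dim_eq KcC h).
lia.
Qed.
End Lie.

Local Close Scope ring_scope.

Theorem corollary2p8 (F : fieldType) (L : vectType F) (br : L -> L -> L)
  (hbr : lie_bracket br) :
  supersolvable br <->
  (forall M : {vspace L}, maximal_subalgebra br M -> ideal_index_is br M 1).
Proof.
split; first exact: dir1.
exact: dir2.
Qed.
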